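(* Let $\mathcal{H}$ be a real or complex Hilbert space and let $S:\mathcal{H}\to\mathcal{H}$ be a (not necessarily densely defined) linear operator. Let $M_{S,-S}$ be the operator on $\mathcal{H}\times\mathcal{H}$ with domain $\operatorname{dom} S\times\operatorname{dom} S$ given by $M_{S,-S}(h,k)=(Sk,Sh)$. The following are equivalent: (i) $S$ is densely defined and skew-adjoint, i.e. $S^*=-S$; (ii) every non-zero real number $t$ is in the resolvent set of $M_{S,-S}$ and $\|R_{S,-S}(t)\|\le 1/|t|$ for all real $t\neq 0$.
   Context: A scalar $\lambda$ is in the resolvent set of $M_{S,-S}$ if $M_{S,-S}-\lambda I$ is injective with everywhere defined bounded inverse on $\mathcal{H}\times\mathcal{H}$; then $R_{S,-S}(\lambda):=(M_{S,-S}-\lambda I)^{-1}$. The norm is the operator norm for the product Hilbert space $\mathcal{H}\times\mathcal{H}$. *)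

(* Defs.v *)
From mathcomp Require Import all_boot all_order all_algebra.
From mathcomp Require Import all_classical all_reals all_analysis.
From mathcomp.real_closed Require Export complex.

Set Implicit Arguments.
Unset Strict Implicit.
Unset Printing Implicit Defensive.

Import Order.TTheory GRing.Theory Num.Theory.
Local Open Scope classical_set_scope.
Local Open Scope ring_scope.

Section HilbertDefs.
Variables (K : numFieldType) (V : normedModType K).

(* Together with completeness of [V] this makes [V] a Hilbert space. *)
Definition is_inner_product (conj : K -> K) (ip : V -> V -> K) : Prop :=
  (forall (a : K) (x x' y : V), ip (a *: x + x') y = a * ip x y + ip x' y) /\
  (forall x y : V, ip y x = conj (ip x y)) /\
  (forall x : V, `|x| ^+ 2 = ip x x).

Definition is_linear_op (D : set V) (S : V -> V) : Prop :=
  D 0 /\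
  (forall (a : K) (x y : V), D x -> D y ->
     D (a *: x + y) /\ S (a *: x + y) = a *: S x + S y).

Definition densely_defined (D : set V) : Prop := closure D = setT.

(* (y, z) lies in the graph of the adjoint S^* : <S x, y> = <x, z> on dom S. *)
Definition adjoint_graph (ip : V -> V -> K) (D : set V) (S : V -> V)
  (y z : V) : Prop :=
  forall x, D x -> ip (S x) y = ip x z.

Definition skew_adjoint (ip : V -> V -> K) (D : set V) (S : V -> V) : Prop :=
  densely_defined D /\
  (forall y z, adjoint_graph ip D S y z <-> (D y /\ z = - S y)).

Definition Mdom (D : set V) (u : V * V) : Prop := D u.1 /\ D u.2.
Definition Mop (S : V -> V) (u : V * V) : V * V := (S u.2, S u.1).

Definition Mshift (S : V -> V) (lambda : K) (u : V * V) : V * V :=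
  ((Mop S u).1 - lambda *: u.1, (Mop S u).2 - lambda *: u.2).

Definition pnorm2 (u : V * V) : K := `|u.1| ^+ 2 + `|u.2| ^+ 2.

Definition is_resolvent (D : set V) (S : V -> V) (lambda : K)
  (Rl : V * V -> V * V) : Prop :=
  (forall u, Mdom D (Rl u) /\ Mshift S lambda (Rl u) = u) /\
  (forall w, Mdom D w -> Rl (Mshift S lambda w) = w) /\
  (exists C : K, forall u, pnorm2 (Rl u) <= C * pnorm2 u).

Definition in_resolvent_set (D : set V) (S : V -> V) (lambda : K) : Prop :=
  exists Rl, is_resolvent D S lambda Rl.

(* ||Rl|| <= 1/|t| for the operator norm of H x H (stated in squared form). *)
Definition resolvent_bound (t : K) (Rl : V * V -> V * V) : Prop :=
  forall u, `|t| ^+ 2 * pnorm2 (Rl u) <= pnorm2 u.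

Definition real_resolvent_condition (D : set V) (S : V -> V) : Prop :=
  forall t : K, t \is Num.real -> t != 0 ->
    in_resolvent_set D S t /\
    (forall Rl, is_resolvent D S t Rl -> resolvent_bound t Rl).

End HilbertDefs.

(* Main.v *)
Require Import Defs.
From mathcomp Require Import all_boot all_order all_algebra.
From mathcomp Require Import all_classical all_reals all_analysis.
From mathcomp.real_closed Require Import complex.
From mathcomp Require Import ring lra.
Import Order.TTheory GRing.Theory Num.Theory.
Local Open Scope classical_set_scope.
Local Open Scope ring_scope.

Lemma archi_inv {R : realType} {d : R} : 0 < d -> exists N : nat, (N.+1%:R)^-1 < d.
Proof.
move=> d0; exists (Num.truncn d^-1).
have h := truncnS_gt d^-1.
by rewrite -[d in _ < d]invrK ltf_pV2 // ?posrE ?invr_gt0.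
Qed.

Lemma inv_mono {R : realType} {N n : nat} : (N <= n)%N -> (n.+1%:R : R)^-1 <= (N.+1%:R)^-1.
Proof. by move=> h; rewrite lef_pV2 ?posrE // ler_nat ltnS. Qed.


Lemma complete_seq (K : numFieldType) (V : completeNormedModType K) (u : nat -> V) :
  (forall e : K, 0 < e -> exists N, forall n m, (N <= n)%N -> (N <= m)%N -> `|u n - u m| < e) ->
  exists p : V, forall e : K, 0 < e -> exists N, forall n, (N <= n)%N -> `|p - u n| < e.
Proof.
move=> Hc.
have cu : cauchy (u @ \oo).
  apply: cauchy_exP => e e0.
  have [N HN] := Hc e e0.
  exists (u N); exists N => // n /= Nn.
  rewrite -ball_normE /ball_ /=. exact: HN.
have /cauchy_cvg cv := cu.
exists (lim (u @ \oo)) => e e0.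
have := @cvgr_dist_lt _ _ _ _ _ u _ cv e e0.
case=> N _ HN. exists N => n Nn. exact: HN.
Qed.

Lemma seq_closure (K : numFieldType) (V : normedModType K) (E : set V) (u : nat -> V) p :
  (forall n, E (u n)) ->
  (forall e : K, 0 < e -> exists N, forall n, (N <= n)%N -> `|p - u n| < e) ->
  closure E p.
Proof.
move=> Eu Hc B /nbhs_ballP [e e0 He].
have [N HN] := Hc e e0.
exists (u N); split => //. apply: He. rewrite -ball_normE /ball_ /=. exact: HN.
Qed.

Lemma zmod_aux (G : zmodType) (p u v w : G) : p + (u - v) + (w - u) = p + w - v.
Proof. by rewrite addrAC -addrA [w - u + _]addrA subrK addrA. Qed.
Lemma z2 (G : zmodType) (x y u v : G) : (x + y) + (v - u) = (x - u) + (y + v).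
Proof. by rewrite [v - u]addrC addrACA. Qed.
Lemma z4 (G : zmodType) (x y u v : G) : (x - y) - (u + v) = (x - u) - (y + v).
Proof. by rewrite !opprD addrACA. Qed.
Lemma z3 (G : zmodType) (f g : G) : (f + g) + (f - g) = f + f.
Proof. by rewrite addrACA subrr addr0. Qed.
Lemma z5 (G : zmodType) (f g : G) : (f + g) - (f - g) = g + g.
Proof. by rewrite opprB addrC addrA subrK addrC. Qed.
Lemma z6 (G : zmodType) (x y u v : G) : (x - y) - (u - v) = (x - u) - (y - v).
Proof. by rewrite !opprB addrACA [RHS]addrACA [- u + _]addrC. Qed.

Section Gen.
Variables (R : realType) (K : numFieldType) (V : completeNormedModType K).
Variables (emb : R -> K) (re : K -> R) (conj : K -> K) (ip : V -> V -> K).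
Hypothesis embD : forall a b, emb (a + b) = emb a + emb b.
Hypothesis embM : forall a b, emb (a * b) = emb a * emb b.
Hypothesis emb0 : emb 0 = 0.
Hypothesis emb1 : emb 1 = 1.
Hypothesis emb_real : forall r, emb r \is Num.real.
Hypothesis reK : forall a, a \is Num.real -> emb (re a) = a.
Hypothesis embK : forall r, re (emb r) = r.
Hypothesis emb_le : forall r s, (emb r <= emb s) = (r <= s).
Hypothesis emb_lt : forall r s, (emb r < emb s) = (r < s).
Hypothesis emb_norm : forall r, `|emb r| = emb `|r|.
Hypothesis reD : forall a b, re (a + b) = re a + re b.
Hypothesis reM : forall r a, re (emb r * a) = r * re a.
Hypothesis reJ : forall a, re (conj a) = re a.
Hypothesis HK0 : forall c, (forall a, re (a * c) = 0) -> c = 0.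
Hypothesis ipL : forall (a : K) (x x' y : V), ip (a *: x + x') y = a * ip x y + ip x' y.
Hypothesis ipC : forall x y : V, ip y x = conj (ip x y).
Hypothesis ipn : forall x : V, `|x| ^+ 2 = ip x x.

Definition nrm (x : V) : R := re `|x|.
Definition rho (x y : V) : R := re (ip x y).

Lemma embN r : emb (- r) = - emb r.
Proof. by apply/eqP; rewrite -subr_eq0 opprK -embD addNr emb0. Qed.
Lemma embB r s : emb (r - s) = emb r - emb s.
Proof. by rewrite embD embN. Qed.
Lemma re0 : re 0 = 0.
Proof. by rewrite -emb0 embK. Qed.
Lemma reN a : re (- a) = - re a.
Proof. by apply/eqP; rewrite -subr_eq0 opprK -reD addNr re0. Qed.
Lemma reB a b : re (a - b) = re a - re b.
Proof. by rewrite reD reN. Qed.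

Lemma normE x : `|x| = emb (nrm x).
Proof. by rewrite reK // normr_real. Qed.

Lemma nrm_ge0 x : 0 <= nrm x.
Proof. by rewrite -emb_le emb0 -normE. Qed.

Lemma nrm_eq0 x : nrm x = 0 -> x = 0.
Proof. by move=> h; apply/normr0_eq0; rewrite normE h emb0. Qed.

Lemma nrmD x y : nrm (x + y) <= nrm x + nrm y.
Proof. by rewrite -emb_le embD -!normE ler_normD. Qed.

Lemma nrmN x : nrm (- x) = nrm x.
Proof. by rewrite /nrm normrN. Qed.

Lemma nrmZ r x : nrm (emb r *: x) = `|r| * nrm x.
Proof. by rewrite /nrm normrZ emb_norm reM. Qed.

Lemma nrm0 : nrm 0 = 0.
Proof. by rewrite /nrm normr0 re0. Qed.

Lemma ipD x y z : ip (x + y) z = ip x z + ip y z.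
Proof. by have := ipL 1 x y z; rewrite scale1r mul1r. Qed.
Lemma ip0 z : ip 0 z = 0.
Proof. have h := ipD 0 0 z; rewrite addr0 in h. by apply: (addrI (ip 0 z)); rewrite -h addr0. Qed.
Lemma ipN x z : ip (- x) z = - ip x z.
Proof. by apply/eqP; rewrite -subr_eq0 opprK -ipD addNr ip0. Qed.
Lemma ipZ a x z : ip (a *: x) z = a * ip x z.
Proof. by rewrite -[a *: x]addr0 ipL ip0 addr0. Qed.

Lemma rhoC x y : rho x y = rho y x.
Proof. by rewrite /rho ipC reJ. Qed.
Lemma rhoDl x y z : rho (x + y) z = rho x z + rho y z.
Proof. by rewrite /rho ipD reD. Qed.
Lemma rhoNl x z : rho (- x) z = - rho x z.
Proof. by rewrite /rho ipN reN. Qed.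
Lemma rhoBl x y z : rho (x - y) z = rho x z - rho y z.
Proof. by rewrite rhoDl rhoNl. Qed.
Lemma rhoZl r x z : rho (emb r *: x) z = r * rho x z.
Proof. by rewrite /rho ipZ reM. Qed.
Lemma rhoDr x y z : rho z (x + y) = rho z x + rho z y.
Proof. by rewrite rhoC rhoDl !(rhoC z). Qed.
Lemma rhoNr x z : rho z (- x) = - rho z x.
Proof. by rewrite rhoC rhoNl rhoC. Qed.
Lemma rhoBr x y z : rho z (x - y) = rho z x - rho z y.
Proof. by rewrite rhoDr rhoNr. Qed.
Lemma rhoZr r x z : rho z (emb r *: x) = r * rho z x.
Proof. by rewrite rhoC rhoZl rhoC. Qed.
Lemma rho0l z : rho 0 z = 0.
Proof. by rewrite /rho ip0 re0. Qed.
Lemma rho0r z : rho z 0 = 0.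
Proof. by rewrite rhoC rho0l. Qed.
Lemma rhoxx x : rho x x = nrm x ^+ 2.
Proof.
by rewrite /rho -ipn normE expr2 -embM embK expr2.
Qed.

Ltac rexp := rewrite ?(rhoDl, rhoDr, rhoBl, rhoBr, rhoNl, rhoNr, rhoZl, rhoZr).

Lemma nrm2E x : nrm x ^+ 2 = rho x x.
Proof. by rewrite rhoxx. Qed.

Lemma rho_ge0 x : 0 <= rho x x.
Proof. by rewrite rhoxx exprn_ge0 // nrm_ge0. Qed.

Lemma CS x y : `|rho x y| <= nrm x * nrm y.
Proof.
have X0 := nrm_ge0 x; have Y0 := nrm_ge0 y.
have [Ye|Yn] := eqVneq (nrm y) 0.
  by rewrite (nrm_eq0 _ Ye) rho0r normr0 nrm0 mulr0.
have h := rho_ge0 (emb (nrm y ^+ 2) *: x - emb (rho x y) *: y).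
move: h; rexp; rewrite (rhoC y x) !rhoxx => h.
have Yp : 0 < nrm y by rewrite lt_neqAle eq_sym Yn Y0.
have h2 : rho x y ^+ 2 <= (nrm x * nrm y) ^+ 2.
  have : 0 <= nrm y ^+ 2 * ((nrm x * nrm y) ^+ 2 - rho x y ^+ 2) by nra.
  rewrite pmulr_rge0 ?subr_ge0 //. by rewrite exprn_gt0.
rewrite -ler_sqr ?nnegrE ?normr_ge0 ?mulr_ge0 // ?nrm_ge0 //.
by rewrite real_normK ?num_real.
Qed.

Definition conv (u : nat -> V) (p : V) :=
  forall e : R, 0 < e -> exists N, forall n, (N <= n)%N -> nrm (p - u n) < e.

Lemma pos_re (e : K) : 0 < e -> 0 < re e /\ emb (re e) = e.
Proof.
move=> e0; have er : e \is Num.real by rewrite gtr0_real.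
by split; rewrite ?reK // -emb_lt emb0 reK.
Qed.

Lemma complete_nrm (u : nat -> V) :
  (forall e : R, 0 < e -> exists N, forall n m, (N <= n)%N -> (N <= m)%N -> nrm (u n - u m) < e) ->
  exists p, conv u p.
Proof.
move=> Hc.
have [p Hp] : exists p : V, forall e : K, 0 < e -> exists N, forall n, (N <= n)%N -> `|p - u n| < e.
  apply: complete_seq => e /pos_re [e0 ee].
  have [N HN] := Hc _ e0; exists N => n m Nn Nm.
  by rewrite normE -ee emb_lt; apply: HN.
exists p => e e0.
have e0' : 0 < emb e by rewrite -emb0 emb_lt.
have [N HN] := Hp _ e0'.
by exists N => n Nn; rewrite -emb_lt -normE; apply: HN.
Qed.

Lemma conv_closure (E : set V) u p : (forall n, E (u n)) -> conv u p -> closure E p.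
Proof.
move=> Eu Hc; apply: (@seq_closure _ _ E u p Eu) => e /pos_re [e0 ee].
have [N HN] := Hc _ e0; exists N => n Nn.
by rewrite normE -ee emb_lt; apply: HN.
Qed.

Lemma nrm_sub_scale w z l :
  nrm (w - emb l *: z) ^+ 2 = nrm w ^+ 2 - 2 * l * rho w z + l ^+ 2 * nrm z ^+ 2.
Proof. rewrite !nrm2E; rexp; rewrite (rhoC z w); ring. Qed.

Lemma quad0 (c Z : R) : 0 <= Z -> (forall l, 2 * l * c <= l ^+ 2 * Z) -> c = 0.
Proof.
move=> Z0 H.
have := H (c / (Z + 1)).
set u := c / (Z + 1).
have cu : c = u * (Z + 1) by rewrite /u mulfVK // gt_eqF // ltr_wpDl.
rewrite cu => h.
have : u = 0 by nra.
by move=> u0; rewrite u0 mul0r.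
Qed.

Lemma proj (E : set V) : E 0 -> (forall a x y, E x -> E y -> E (a *: x + y)) ->
  forall f : V, exists (e : nat -> V), (forall n, E (e n)) /\
    exists p, conv e p /\ forall z, E z -> rho (f - p) z = 0.
Proof.
move=> E0 EL f.
have EZ : forall a x, E x -> E (a *: x) by move=> a x Ex; rewrite -[_ *: _]addr0; apply: EL.
have ED : forall x y, E x -> E y -> E (x + y) by move=> x y Ex Ey; rewrite -[x]scale1r; apply: EL.
pose A := [set r | exists x, E x /\ r = nrm (f - x) ^+ 2].
have hA : has_inf A.
  split; first by exists (nrm (f - 0) ^+ 2); exists 0.
  by exists 0 => r [x [_ ->]]; rewrite exprn_ge0 // nrm_ge0.
pose d := inf A.
have dle : forall x, E x -> d <= nrm (f - x) ^+ 2.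
  by move=> x Ex; apply: (ge_inf hA.2); exists x.
have ex : forall n : nat, exists x, E x /\ nrm (f - x) ^+ 2 < d + (n.+1%:R)^-1.
  move=> n; have i0 : 0 < (n.+1%:R : R)^-1 by rewrite invr_gt0.
  have [r [x [Ex ->]] lt] := inf_adherent i0 hA.
  by exists x.
pose e n := proj1_sig (cid (ex n)).
have eP n : E (e n) /\ nrm (f - e n) ^+ 2 < d + (n.+1%:R)^-1 := proj2_sig (cid (ex n)).
have Cauchy : forall eps : R, 0 < eps -> exists N, forall n m, (N <= n)%N -> (N <= m)%N -> nrm (e n - e m) < eps.
  move=> eps eps0.
  have q0 : 0 < eps ^+ 2 / 4 by rewrite divr_gt0 // exprn_gt0.
  have [N HN] := archi_inv q0.
  exists N => n m Nn Nm.
  have [En ln] := eP n; have [Em lm] := eP m.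
  pose mid := emb (2^-1) *: (e n + e m).
  have dm := dle mid (EZ _ _ (ED _ _ En Em)).
  have key : nrm (e n - e m) ^+ 2 = 2 * nrm (f - e n) ^+ 2 + 2 * nrm (f - e m) ^+ 2 - 4 * nrm (f - mid) ^+ 2.
    rewrite /mid !nrm2E; rexp.
    rewrite (rhoC (e m) (e n)) (rhoC (e n) f) (rhoC (e m) f).
    by field.
  have i1 := inv_mono (R:=R) Nn; have i2 := inv_mono (R:=R) Nm.
  have sq : nrm (e n - e m) ^+ 2 < eps ^+ 2.
    move: key ln lm dm i1 i2 HN.
    set a1 := nrm (e n - e m) ^+ 2; set a2 := nrm (f - e n) ^+ 2; set a3 := nrm (f - e m) ^+ 2.
    set a4 := nrm (f - mid) ^+ 2; set a5 := eps ^+ 2; set i := N.+1%:R^-1.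
    set j := n.+1%:R^-1; set k := m.+1%:R^-1.
    clearbody a1 a2 a3 a4 a5 i j k d. move=> *. lra.
  have := nrm_ge0 (e n - e m).
  nra.
have [p cp] := complete_nrm _ Cauchy.
exists e; split; first by move=> n; have [] := eP n.
exists p; split => // z Ez.
apply: (quad0 _ _ (exprn_ge0 2 (nrm_ge0 z))) => l.
apply/ler_addgt0Pr => eps eps0.
pose M := 2 * (`|l| * nrm z) + 1.
have M0 : 0 < M by rewrite /M ltr_wpDl // mulr_ge0 // mulr_ge0 // nrm_ge0.
pose eta := eps / (2 * M).
have eta0 : 0 < eta by rewrite divr_gt0 // mulr_gt0.
have etaM : 2 * M * eta = eps by rewrite /eta mulrC mulfVK // gt_eqF // mulr_gt0.
have [N1 HN1] := cp _ eta0.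
have q0 : 0 < eps / 2 by rewrite divr_gt0.
have [N2 HN2] := archi_inv q0.
pose n := maxn N1 N2.
have dl := HN1 n (leq_maxl _ _).
have il := inv_mono (R:=R) (leq_maxr N1 N2).
have [En ln] := eP n.
have dx := dle _ (EL (emb l) _ _ Ez En).
have vid : f - (emb l *: z + e n) = (f - e n) - emb l *: z.
  by rewrite opprD addrA addrAC.
rewrite vid nrm_sub_scale in dx.
have wid : f - e n = (f - p) + (p - e n) by rewrite addrA subrK.
rewrite [in rho _ z]wid rhoDl in dx.
have cs := CS (p - e n) z.
have t1 : - (2 * l * rho (p - e n) z) <= 2 * (`|l| * `|rho (p - e n) z|).
  rewrite -mulrA; apply: (le_trans (ler_norm _)).
  by rewrite normrN !normrM normr_nat.
have t2 : `|l| * `|rho (p - e n) z| <= `|l| * (eta * nrm z).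
  apply: ler_wpM2l => //; apply: (le_trans cs).
  by apply: ler_wpM2r; [exact: nrm_ge0 | exact: ltW].
have t3 : 2 * (`|l| * (eta * nrm z)) <= eps / 2.
  have : 2 * (`|l| * (eta * nrm z)) * 2 <= 2 * M * eta.
    rewrite /M; have := nrm_ge0 z; have := normr_ge0 l; nra.
  rewrite etaM; lra.
rewrite mulrDr in dx.
move: dx ln il HN2 t1 t2 t3.
set X := 2 * l * rho (f - p) z; set Y := 2 * l * rho (p - e n) z.
set a := `|l| * `|rho (p - e n) z|; set b := `|l| * (eta * nrm z).
set W := nrm (f - e n) ^+ 2; set T := l ^+ 2 * nrm z ^+ 2.
set j := n.+1%:R^-1; set i := N2.+1%:R^-1.
clearbody X Y a b W T j i d. move=> *; lra.
Qed.

Variables (D : set V) (S : V -> V).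
Hypothesis HD0 : D 0.
Hypothesis HDL : forall (a : K) (x y : V), D x -> D y ->
     D (a *: x + y) /\ S (a *: x + y) = a *: S x + S y.

Lemma S0 : S 0 = 0.
Proof.
have [_ h] := HDL 1 _ _ HD0 HD0; move: h; rewrite !scale1r addr0 => h.
by apply: (addrI (S 0)); rewrite -h addr0.
Qed.

Lemma SZ a x : D x -> D (a *: x) /\ S (a *: x) = a *: S x.
Proof. by move=> Dx; have := HDL a _ _ Dx HD0; rewrite !addr0 S0 addr0. Qed.

Lemma SD x y : D x -> D y -> D (x + y) /\ S (x + y) = S x + S y.
Proof. by move=> Dx Dy; have := HDL 1 _ _ Dx Dy; rewrite !scale1r. Qed.

Lemma SB x y : D x -> D y -> D (x - y) /\ S (x - y) = S x - S y.
Proof.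
move=> Dx Dy; have := HDL (-1) _ _ Dy Dx.
by rewrite !scaleN1r addrC [- S y + _]addrC.
Qed.

Lemma adj_from_rho y z : (forall x, D x -> rho (S x) y = rho x z) ->
  adjoint_graph ip D S y z.
Proof.
move=> H x Dx; apply/eqP; rewrite -subr_eq0; apply/eqP; apply: HK0 => a.
rewrite mulrBr reB -!ipZ.
have [Dax Sax] := SZ a _ Dx.
by rewrite -Sax; apply/eqP; rewrite subr_eq0; apply/eqP; apply: H.
Qed.

Lemma rho_from_adj y z : adjoint_graph ip D S y z -> forall x, D x -> rho (S x) y = rho x z.
Proof. by move=> H x Dx; rewrite /rho H. Qed.

Definition skewr := forall x y, D x -> D y -> rho (S x) y + rho x (S y) = 0.

Lemma pnorm2E (u : V * V) : pnorm2 u = emb (nrm u.1 ^+ 2 + nrm u.2 ^+ 2).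
Proof. by rewrite /pnorm2 !normE embD !expr2 !embM. Qed.

Lemma normt2 r : `|emb r| ^+ 2 = emb (r ^+ 2).
Proof. by rewrite emb_norm expr2 -embM -expr2 real_normK // num_real. Qed.

Lemma Mexp t h k :
  nrm (S k - emb t *: h) ^+ 2 + nrm (S h - emb t *: k) ^+ 2 =
  nrm (S k) ^+ 2 + nrm (S h) ^+ 2 + t ^+ 2 * (nrm h ^+ 2 + nrm k ^+ 2)
  - 2 * t * (rho (S k) h + rho (S h) k).
Proof. rewrite !nrm_sub_scale; ring. Qed.


Lemma emb_inj : injective emb.
Proof. by move=> r s h; rewrite -(embK r) h embK. Qed.

Lemma emb_neq0 r : r != 0 -> emb r != 0.
Proof. by apply: contra => /eqP h; apply/eqP; apply: emb_inj; rewrite h emb0. Qed.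

Lemma ii_skew : real_resolvent_condition D S -> skewr.
Proof.
move=> RC x y Dx Dy.
set B := rho (S x) y + rho x (S y).
set A := nrm (S x) ^+ 2 + nrm (S y) ^+ 2.
have key : forall t, t != 0 -> 2 * t * B <= A.
  move=> t t0.
  have [[Rl HR] Hb] := RC (emb t) (emb_real t) (emb_neq0 _ t0).
  have [_ [HL _]] := HR.
  have := Hb Rl HR (Mshift S (emb t) (y, x)).
  rewrite HL; last by split.
  rewrite !pnorm2E /= normt2 -embM emb_le Mexp (rhoC (S y) x) -/B.
  move=> h; rewrite /A; lra.
apply/eqP; apply: contraT => B0.
have A0 : 0 <= A by rewrite addr_ge0 // exprn_ge0 // nrm_ge0.
have t0 : (A + 1) / B != 0 by rewrite mulf_neq0 // ?invr_eq0 // gt_eqF // ltr_wpDl.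
have := key _ t0.
rewrite -mulrA mulfVK // => h; exfalso; lra.
Qed.

Lemma skew_self x : skewr -> D x -> rho (S x) x = 0.
Proof.
move=> sk Dx; have := sk x x Dx Dx; rewrite (rhoC x (S x)).
lra.
Qed.

Lemma ii_dense : real_resolvent_condition D S -> densely_defined D.
Proof.
move=> RC; have sk := ii_skew RC.
apply/seteqP; split => // y _.
have DL : forall a x z, D x -> D z -> D (a *: x + z) by move=> a x z Dx Dz; have [] := HDL a _ _ Dx Dz.
have [e [De [p [cp orth]]]] := proj _ HD0 DL y.
have cl := conv_closure _ _ _ De cp.
suff -> : y = p by [].
have [[Rl HR] _] := RC 1 (real1 _) (oner_neq0 _).
have [HR1 _] := HR.
have := HR1 (y - p, 0).
case: (Rl (y - p, 0)) => h k [[/= Dh Dk]].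
rewrite /Mshift /= !scale1r => [[E1 E2]].
have kE : S h = k by apply/eqP; rewrite -subr_eq0 E2.
have o := orth _ Dh.
rewrite -E1 rhoBl in o.
have s1 := sk _ _ Dk Dh.
rewrite kE in s1.
have hk : rho h h + rho k k = 0 by lra.
rewrite !rhoxx in hk.
have h0 : h = 0.
  by apply: nrm_eq0; have := nrm_ge0 h; have := nrm_ge0 k; nra.
have k0 : k = 0.
  by apply: nrm_eq0; have := nrm_ge0 h; have := nrm_ge0 k; nra.
by apply/eqP; rewrite -subr_eq0 -E1 k0 h0 S0 subr0.
Qed.


Lemma ii_adj : real_resolvent_condition D S ->
  forall y z, adjoint_graph ip D S y z -> D y /\ z = - S y.
Proof.
move=> RC y z adj; have sk := ii_skew RC.
have ad := rho_from_adj _ _ adj.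
have m10 : (-1 : R) != 0 by rewrite oppr_eq0 oner_eq0.
have [[Rm HRm] _] := RC (emb (-1)) (emb_real _) (emb_neq0 _ m10).
have [HRm1 _] := HRm.
have := HRm1 (y - z, y - z).
case: (Rm (y - z, y - z)) => h k [[/= Dh Dk]].
rewrite /Mshift /= embN emb1 !scaleN1r !opprK => [[E1 E2]].
have [[R1 HR1] _] := RC 1 (real1 _) (oner_neq0 _).
have [HR11 _] := HR1.
have := HR11 (y - h, y - k).
case: (R1 (y - h, y - k)) => a b [[/= Da Db]].
rewrite /Mshift /= !scale1r => [[F1 F2]].
have e1 := ad _ Db; have e2 := ad _ Da.
have e3 := sk _ _ Db Dh; have e4 := sk _ _ Da Dk.
have e5 : rho b (S h) + rho b k = rho b y - rho b z by rewrite -rhoDr E2 rhoBr.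
have e6 : rho a (S k) + rho a h = rho a y - rho a z by rewrite -rhoDr E1 rhoBr.
have key : rho (y - h) (y - h) + rho (y - k) (y - k) = 0.
  rewrite -{1}F1 -{1}F2; rexp; lra.
rewrite !rhoxx in key.
have h0 : y - h = 0.
  by apply: nrm_eq0; have := nrm_ge0 (y - h); have := nrm_ge0 (y - k); nra.
have k0 : y - k = 0.
  by apply: nrm_eq0; have := nrm_ge0 (y - h); have := nrm_ge0 (y - k); nra.
have yh : y = h by apply/eqP; rewrite -subr_eq0 h0.
have yk : y = k by apply/eqP; rewrite -subr_eq0 k0.
split; first by rewrite yh.
move: E1; rewrite -yk -yh => E1.
have -> : z = y - (S y + y) by rewrite E1 opprB addrC subrK.
by rewrite opprD addrCA subrr addr0.
Qed.


Lemma small0 (c : R) : (forall e : R, 0 < e -> `|c| <= e) -> c = 0.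
Proof.
move=> H; apply/normr0_eq0/eqP; rewrite eq_le normr_ge0 andbT.
by apply/ler_addgt0Pr => e e0; rewrite add0r; apply: H.
Qed.

Definition adjH := forall y z, adjoint_graph ip D S y z <-> D y /\ z = - S y.

Lemma i_skew : adjH -> skewr.
Proof.
move=> H x y Dx Dy.
have hy : D y /\ - S y = - S y by [].
have := rho_from_adj _ _ ((proj2 (H y (- S y))) hy) x Dx.
rewrite rhoNr; lra.
Qed.

Lemma linB s x y : D x -> D y ->
  S (x - y) - emb s *: (x - y) = (S x - emb s *: x) - (S y - emb s *: y).
Proof.
move=> Dx Dy; rewrite (SB _ _ Dx Dy).2 scalerBr.
by rewrite !opprB addrACA [RHS]addrACA [- S y + _]addrC.
Qed.


Lemma surj : adjH -> forall s, s != 0 -> forall f, exists a, D a /\ S a - emb s *: a = f.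
Proof.
move=> Hadj s s0 f.
have sk := i_skew Hadj.
pose E := [set g | exists a, D a /\ g = S a - emb s *: a].
have E0 : E 0 by exists 0; rewrite S0 scaler0 subrr.
have EL : forall c x y, E x -> E y -> E (c *: x + y).
  move=> c _ _ [a1 [Da1 ->]] [a2 [Da2 ->]].
  have [Dc Sc] := HDL c _ _ Da1 Da2.
  exists (c *: a1 + a2); split => //; rewrite Sc.
  by rewrite scalerBr scalerDr !scalerA opprD addrACA (mulrC c).
have [e [Ee [p [cp orth]]]] := proj _ E0 EL f.
pose a n := sval (cid (Ee n)).
have aP n : D (a n) /\ e n = S (a n) - emb s *: a n := svalP (cid (Ee n)).
have nid : forall x, D x -> (`|s| * nrm x) ^+ 2 <= nrm (S x - emb s *: x) ^+ 2.
  move=> x Dx; rewrite nrm_sub_scale skew_self // exprMn real_normK ?num_real //.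
  have := exprn_ge0 2 (nrm_ge0 (S x)); lra.
have lb : forall x, D x -> `|s| * nrm x <= nrm (S x - emb s *: x).
  move=> x Dx; rewrite -ler_sqr ?nnegrE ?mulr_ge0 ?normr_ge0 ?nrm_ge0 //; exact: nid.
have ecau : forall eps : R, 0 < eps -> exists N, forall n m, (N <= n)%N -> (N <= m)%N -> nrm (e n - e m) < eps.
  move=> eps eps0; have eps2 : 0 < eps / 2 by rewrite divr_gt0.
  have [N HN] := cp _ eps2; exists N => n m Nn Nm.
  have -> : e n - e m = (p - e m) - (p - e n) by rewrite [in RHS]opprB [in RHS]addrC addrA subrK.
  apply: (le_lt_trans (nrmD _ _)); rewrite nrmN.
  have := HN _ Nn; have := HN _ Nm; lra.
have sp : 0 < `|s| by rewrite normr_gt0.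
have acau : forall eps : R, 0 < eps -> exists N, forall n m, (N <= n)%N -> (N <= m)%N -> nrm (a n - a m) < eps.
  move=> eps eps0; have [N HN] := ecau (eps * `|s|) (mulr_gt0 eps0 sp).
  exists N => n m Nn Nm.
  have [Dn En] := aP n; have [Dm Em] := aP m.
  have := lb _ (SB _ _ Dn Dm).1; rewrite linB // -En -Em => h.
  have := HN _ _ Nn Nm => h2.
  rewrite -(ltr_pM2r sp) mulrC; lra.
have [a0 ca] := complete_nrm _ acau.
pose s0' := p + emb s *: a0.
have cs : conv (fun n => S (a n)) s0'.
  move=> eps eps0; have eps2 : 0 < eps / 2 by rewrite divr_gt0.
  have eps3 : 0 < eps / 2 / `|s| by rewrite divr_gt0.
  have [N1 H1] := cp _ eps2; have [N2 H2] := ca _ eps3.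
  exists (maxn N1 N2) => n Nn.
  have h1 := H1 _ (leq_trans (leq_maxl _ _) Nn).
  have h2 := H2 _ (leq_trans (leq_maxr _ _) Nn).
  have [Dn En] := aP n.
  have -> : s0' - S (a n) = (p - e n) + emb s *: (a0 - a n).
    by rewrite /s0' En scalerBr opprB zmod_aux.
  apply: le_lt_trans (nrmD _ _) _; rewrite nrmZ.
  rewrite ltr_pdivlMr // in h2.
  rewrite mulrC; lra.
have adj0 : adjoint_graph ip D S a0 (- s0').
  apply: adj_from_rho => x Dx.
  rewrite rhoNr; apply/eqP; rewrite -subr_eq0 opprK; apply/eqP; apply: small0 => eps eps0.
  pose M := nrm (S x) + nrm x + 1.
  have M0 : 0 < M by rewrite /M ltr_wpDl // addr_ge0 // nrm_ge0.
  have eta0 : 0 < eps / M by rewrite divr_gt0.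
  have [N1 H1] := ca _ eta0; have [N2 H2] := cs _ eta0.
  pose n := maxn N1 N2.
  have h1 := H1 n (leq_maxl _ _); have h2 := H2 n (leq_maxr _ _).
  have [Dn _] := aP n.
  have skn := sk _ _ Dx Dn.
  have c1 := CS (S x) (a0 - a n); have c2 := CS x (s0' - S (a n)).
  rewrite !rhoBr in c1 c2.
  have e1 : `|rho (S x) a0 + rho x s0'| <= `|rho (S x) a0 - rho (S x) (a n)| + `|rho x s0' - rho x (S (a n))|.
    apply: le_trans (ler_normD _ _); rewrite le_eqVlt; apply/orP; left; apply/eqP; congr `|_|; lra.
  have m1 : nrm (S x) * nrm (a0 - a n) <= nrm (S x) * (eps / M).
    by apply: ler_wpM2l; [exact: nrm_ge0 | exact: ltW].
  have m2 : nrm x * nrm (s0' - S (a n)) <= nrm x * (eps / M).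
    by apply: ler_wpM2l; [exact: nrm_ge0 | exact: ltW].
  have m3 : (nrm (S x) + nrm x) * (eps / M) <= eps.
    have : M * (eps / M) = eps by rewrite mulrC mulfVK // gt_eqF.
    rewrite /M mulrDl mul1r; have := eta0; lra.
  lra.
have [Da0 Sa0] := (proj1 (Hadj a0 (- s0'))) adj0.
have Sa0' : S a0 = s0' by apply: oppr_inj.
pose w := f - p.
have ow : forall x, D x -> rho w (S x - emb s *: x) = 0.
  by move=> x Dx; apply: orth; exists x.
have adjw : adjoint_graph ip D S w (emb s *: w).
  apply: adj_from_rho => x Dx; have := ow x Dx.
  rewrite rhoBr rhoZr rhoZr (rhoC w (S x)) (rhoC w x); lra.
have [Dw _] := (proj1 (Hadj w (emb s *: w))) adjw.
have := ow w Dw; rewrite rhoBr rhoZr (rhoC w (S w)) skew_self // rhoxx => hw.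
have w0 : w = 0.
  apply: nrm_eq0; have : s * nrm w ^+ 2 = 0 by lra.
  by move/eqP; rewrite mulf_eq0 (negbTE s0) /= sqrf_eq0 => /eqP.
exists a0; split => //.
have -> : f = p by apply/eqP; rewrite -subr_eq0 -/w w0.
by rewrite Sa0' /s0' addrK.
Qed.


Lemma half_twice (x : V) : emb (2^-1) *: (x + x) = x.
Proof.
have h2 : (2^-1 + 2^-1 : R) = 1 by field.
by rewrite scalerDr -scalerDl -embD h2 emb1 scale1r.
Qed.

Lemma scaleC (a b : K) (x : V) : a *: (b *: x) = b *: (a *: x).
Proof. by rewrite !scalerA mulrC. Qed.

Lemma i_res : adjH -> real_resolvent_condition D S.
Proof.
move=> Hadj t tr t0.
have sk := i_skew Hadj.
pose tau := re t.
have tE : emb tau = t := reK _ tr.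
have tau0 : tau != 0 by apply: contra t0 => /eqP h; rewrite -tE h emb0.
have tau0' : - tau != 0 by rewrite oppr_eq0.
have bnd : forall h k, D h -> D k -> tau ^+ 2 * (nrm h ^+ 2 + nrm k ^+ 2) <=
    nrm (S k - emb tau *: h) ^+ 2 + nrm (S h - emb tau *: k) ^+ 2.
  move=> h k Dh Dk; rewrite Mexp (rhoC (S h) k) sk //.
  have := exprn_ge0 2 (nrm_ge0 (S k)); have := exprn_ge0 2 (nrm_ge0 (S h)); lra.
have bndK : forall w, Mdom D w -> `|t| ^+ 2 * pnorm2 w <= pnorm2 (Mshift S t w).
  move=> [h k] [/= Dh Dk]; rewrite -tE normt2 !pnorm2E -embM emb_le /=; exact: bnd.
have surjM : forall u, exists w, Mdom D w /\ Mshift S t w = u.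
  move=> [f g].
  have [a [Da Ea]] := surj Hadj _ tau0 (f + g).
  have [b [Db Eb]] := surj Hadj _ tau0' (f - g).
  rewrite embN scaleNr opprK in Eb.
  pose c := emb (2^-1).
  have [Dab Sab] := SB _ _ Da Db; have [Dapb Sapb] := SD _ _ Da Db.
  have [Dh Sh] := SZ c _ Dab; have [Dk Sk] := SZ c _ Dapb.
  exists (c *: (a - b), c *: (a + b)); split; first by split.
  rewrite /Mshift /= -tE Sh Sk Sab Sapb !(scaleC (emb tau) c) -!scalerBr.
  congr (_, _).
    by rewrite !scalerBr opprB -scalerBr -scalerDr z2 Ea Eb z3 half_twice.
  by rewrite [emb tau *: _]scalerDr z4 Ea Eb z5 half_twice.
have uniq : forall w w', Mdom D w -> Mdom D w' -> Mshift S t w = Mshift S t w' -> w = w'.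
  move=> [h k] [h' k'] [/= Dh Dk] [/= Dh' Dk'].
  rewrite /Mshift /= -tE => -[E1 E2].
  have [Dhh Shh] := SB _ _ Dh' Dh; have [Dkk Skk] := SB _ _ Dk' Dk.
  have e1 : S (k' - k) - emb tau *: (h' - h) = 0 by rewrite Skk scalerBr z6 E1 subrr.
  have e2 : S (h' - h) - emb tau *: (k' - k) = 0 by rewrite Shh scalerBr z6 E2 subrr.
  have := bnd _ _ Dhh Dkk.
  have z0 : (0 : R) ^+ 2 = 0 by rewrite expr2 mul0r.
  rewrite e1 e2 nrm0 z0 addr0 => hb.
  have tp : 0 < tau ^+ 2 by rewrite lt_def sqrf_eq0 tau0 sqr_ge0.
  have n1 := exprn_ge0 2 (nrm_ge0 (h' - h)); have n2 := exprn_ge0 2 (nrm_ge0 (k' - k)).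
  have hz : nrm (h' - h) ^+ 2 + nrm (k' - k) ^+ 2 <= 0.
    by rewrite -(pmulr_rle0 _ tp).
  have a1 : nrm (h' - h) = 0.
    by apply/eqP; rewrite -(sqrf_eq0) eq_le n1 andbT; lra.
  have a2 : nrm (k' - k) = 0.
    by apply/eqP; rewrite -(sqrf_eq0) eq_le n2 andbT; lra.
  have := nrm_eq0 _ a1; have := nrm_eq0 _ a2.
  by move=> /eqP; rewrite subr_eq0 => /eqP -> /eqP; rewrite subr_eq0 => /eqP ->.
have resb : forall Rl, is_resolvent D S t Rl -> resolvent_bound t Rl.
  move=> Rl [HR1 _] u; have [Dw Ew] := HR1 u.
  by have := bndK _ Dw; rewrite Ew.
split => //.
pose Rl u := sval (cid (surjM u)).
exists Rl; split; first by move=> u; exact: svalP (cid (surjM u)).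
split.
  move=> w Dw; have [D' E'] := svalP (cid (surjM (Mshift S t w))).
  exact: uniq D' Dw E'.
exists (emb ((tau ^+ 2)^-1)) => u.
have [Dw Ew] := svalP (cid (surjM u)).
have := bndK _ Dw; rewrite Ew -/(Rl u) -tE normt2 !pnorm2E -!embM !emb_le.
have tp : 0 < tau ^+ 2 by rewrite lt_def sqrf_eq0 tau0 sqr_ge0.
by rewrite mulrC -ler_pdivlMr // mulrC.
Qed.

Theorem main_gen : skew_adjoint ip D S <-> real_resolvent_condition D S.
Proof.
split.
  by move=> [_ Hadj]; apply: i_res.
move=> RC; split; first exact: ii_dense.
move=> y z; split; first exact: ii_adj.
move=> [Dy ->]; apply: adj_from_rho => x Dx.
have := ii_skew RC _ _ Dx Dy; rewrite rhoNr; lra.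
Qed.

End Gen.

Theorem corollary4p3 :
  (* real Hilbert spaces *)
  (forall (R : realType) (H : completeNormedModType R) (ip : H -> H -> R)
     (D : set H) (S : H -> H),
     is_inner_product id ip -> is_linear_op D S ->
     (skew_adjoint ip D S <-> real_resolvent_condition D S)) /\
  (* complex Hilbert spaces *)
  (forall (R : realType) (H : completeNormedModType R[i]) (ip : H -> H -> R[i])
     (D : set H) (S : H -> H),
     is_inner_product Num.conj ip -> is_linear_op D S ->
     (skew_adjoint ip D S <-> real_resolvent_condition D S)).
Proof.
split.
  move=> R H ip D S [ipL [ipC ipn]] [HD0 HDL].
  apply: (@main_gen R R H id id id ip) => //.
  - by move=> r; rewrite num_real.
  - by move=> c /(_ 1); rewrite mul1r.
move=> R H ip D S [ipL [ipC ipn]] [HD0 HDL].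
apply: (@main_gen R R[i] H (fun r => r%:C%C) (@complex.Re R) Num.conj ip) => //.
- by move=> a b; rewrite rmorphD.
- by move=> a b; rewrite rmorphM.
- by move=> r; apply/complex_realP; exists r.
- by move=> a ar; rewrite RRe_real.
- by move=> r s; rewrite lecR.
- by move=> r s; rewrite ltcR.
- by move=> r; rewrite normc_def /= [0 ^+ 2]expr2 mul0r addr0 sqrtr_sqr.
- by move=> [a1 a2] [b1 b2].
- by move=> r [a1 a2] /=; rewrite mul0r subr0.
- by move=> [a1 a2].
- move=> [x y] H0.
  have h1 := H0 1; have h2 := H0 (0 +i* (-1))%C.
  move: h1 h2 => /=; rewrite mul1r !mul0r subr0 mulN1r opprK add0r => h1 h2.
  by rewrite h1 h2.
Qed.
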